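(* For any edge-set $F\subseteq E(H)$ with $|F|=\ell$ and any tree embedding $(\mathcal T,\mathcal M,y)$ in the support of $\mathcal D$ that is good for $F$, the number of shattered components in $\mathbb Q^F$ is at most $2\ell\beta$.
   Context: Standing setup. $G=(V,E)$ is an undirected graph with $n=|V|$, demand-pairs $(S_i,T_i)$, $i\in[q]$, of subsets of $V$. $\ell\ge1$ is an integer and $E_\ell\subseteq E$ an edge set such that in $(V,E_\ell)$ every $(S_i,T_i)$ is $\ell$-edge-connected. $x:E\to[0,1]$ satisfies $x_e=1$ for $e\in E_\ell$ and $\sum_{e\in\delta_G(X)}x_e\ge \ell+1$ for every $i\in[q]$ and every $X$ with $T_i\subseteq X\subseteq V\setminus S_i$. $\beta\ge1$ is a real. $\mathsf{LARGE}=\{e: x_e\ge 1/(4\ell\beta)\}$ and $H=(V,\mathsf{LARGE})$. Capacities: $\tilde x_e=1/(4\ell\beta)$ if $e\in\mathsf{LARGE}$; $\tilde x_e=0$ if $x_e<\frac{1}{2n^2}\cdot\frac1{4\ell\beta}$; $\tilde x_e=x_e$ otherwise. A tree embedding $(\mathcal T,\mathcal M,y)$ of $(G,\tilde x)$: $\mathcal T$ is a tree; $\mathcal M$ maps nodes of $\mathcal T$ to vertices of $G$ and is a bijection between leaves of $\mathcal T$ and $V$; each tree edge $f=(u,v)$ is mapped to a path $\mathcal M(f)$ in $G$ between $\mathcal M(u)$ and $\mathcal M(v)$; $y(f)=\tilde x(\delta_G(X))$ where $(X,V\setminus X)$ is the leaf partition induced by $\mathcal T-f$. $\mathcal M^{-1}(e)=\{f: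 e\in\mathcal M(f)\}$, $\mathcal M^{-1}(F)=\bigcup_{e\in F}\mathcal M^{-1}(e)$. $\mathcal D$ is a probability distribution over tree embeddings of $(G,\tilde x)$ with $\mathbb{E}_{\mathcal T\sim\mathcal D}[\sum_{f\in\mathcal M^{-1}(e)}y(f)]\le\beta\,\tilde x_e$ for every $e\in E$, and for every tree in its support and all disjoint $A,B\subseteq V$, the maximum $A$–$B$ flow in $\mathcal T$ under $y$ is at least the maximum $A$–$B$ flow in $G$ under $\tilde x$. A tree embedding is good for $F\subseteq E(H)$ if $\sum_{f\in\mathcal M^{-1}(F)}y(f)\le1/2$. $\mathbb Q^F$ is the set of vertex sets of connected components of $(V,E(H)\setminus F)$. A component $Q\in\mathbb Q^F$ is shattered (w.r.t. $\mathcal T$) if its leaves are not all in one connected component of $\mathcal T$ with the edges $\mathcal M^{-1}(F)$ removed. *)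

(* Defs.v *)
From HB Require Import structures.
From mathcomp Require Import all_boot all_order all_algebra.
From Stdlib Require List.
Set Implicit Arguments. Unset Strict Implicit. Unset Printing Implicit Defensive.
Import Order.TTheory GRing.Theory Num.Theory.
Local Open Scope ring_scope.

Section Graphs.
Variables (W K : finType) (ends : K -> W * W).

Definition gadj (F : {set K}) : rel W :=
  fun u v => [exists k in F, (ends k == (u, v)) || (ends k == (v, u))].

Definition gconn (F : {set K}) : rel W := connect (gadj F).

Definition gcut (X : {set W}) : {set K} :=
  [set k | ((ends k).1 \in X) != ((ends k).2 \in X)].

Definition gdeg (u : W) : nat :=
  #|[set k | ((ends k).1 == u) || ((ends k).2 == u)]|.

(* a tree: connected, and minimally so (every edge is a bridge; this also
   excludes loops and parallel edges) *)
Definition is_tree : bool :=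
  [forall u, forall v, gconn setT u v] &&
  [forall k, ~~ gconn (setT :\ k) (ends k).1 (ends k).2].

Definition is_leaf (u : W) : bool := (gdeg u <= 1)%N.

(* simple path from a to b: edges es, successive vertices vs (after a),
   all vertices distinct *)
Fixpoint walk_from (a : W) (es : seq K) (vs : seq W) : bool :=
  match es, vs with
  | [::], [::] => true
  | k :: es', v :: vs' =>
      ((ends k == (a, v)) || (ends k == (v, a))) && walk_from v es' vs'
  | _, _ => false
  end.

Definition simple_path (a b : W) (es : seq K) (vs : seq W) : bool :=
  [&& walk_from a es vs, last a vs == b & uniq (a :: vs)].

(* flows: g k is the flow on k in direction (ends k).1 -> (ends k).2 *)
Variable R : numDomainType.

Definition netout (g : K -> R) (w : W) : R :=
  \sum_(k | (ends k).1 == w) g k - \sum_(k | (ends k).2 == w) g k.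

Definition is_flow (cap : K -> R) (A B : {set W}) (g : K -> R) : Prop :=
  (forall k, `|g k| <= cap k) /\
  (forall w, w \notin A -> w \notin B -> netout g w = 0).

Definition flow_value (g : K -> R) (A : {set W}) : R := \sum_(w in A) netout g w.

End Graphs.

Section Setup.
Variables (R : realFieldType) (V E : finType) (ends : E -> V * V).

Definition ledge_connected (l : nat) (El : {set E}) (S T : {set V}) : Prop :=
  forall X : {set V}, T \subset X -> X \subset ~: S ->
    (l <= #|El :&: gcut ends X|)%N.

Definition LARGE (l : nat) (beta : R) (x : E -> R) : {set E} :=
  [set e | (4 * l%:R * beta)^-1 <= x e].

Definition xtilde (n l : nat) (beta : R) (x : E -> R) (e : E) : R :=
  let c := (4 * l%:R * beta)^-1 in
  if c <= x e then c
  else if x e < (2 * (n ^ 2)%:R)^-1 * c then 0 else x e.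

(* tree embedding data: tree nodes, tree edges with endpoints, the node map
   M, the path M(f) (edge sequence) with its vertex sequence *)
Record temb := TEmb {
  tnode : finType;
  tedge : finType;
  tends : tedge -> tnode * tnode;
  tmap : tnode -> V;
  tpath : tedge -> seq E;
  tpverts : tedge -> seq V
}.
Arguments tends t _ : clear implicits.
Arguments tmap t _ : clear implicits.
Arguments tpath t _ : clear implicits.
Arguments tpverts t _ : clear implicits.

Definition leaves (T : temb) : {set tnode T} := [set u | is_leaf (tends T) u].

Definition leaves_in (T : temb) (A : {set V}) : {set tnode T} :=
  [set u in leaves T | tmap T u \in A].

Definition tside (T : temb) (f : tedge T) : {set V} :=
  [set v | [exists u, [&& u \in leaves T, tmap T u == v &
                          gconn (tends T) (setT :\ f) (tends T f).1 u]]].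

Definition ty (xt : E -> R) (T : temb) (f : tedge T) : R :=
  \sum_(e in gcut ends (tside f)) xt e.

Definition Minv (T : temb) (F : {set E}) : {set tedge T} :=
  [set f | has (fun e => e \in F) (tpath T f)].

Definition is_tree_embedding (T : temb) : Prop :=
  [/\ is_tree (tends T),
      {in leaves T &, injective (tmap T)},
      (forall v, exists2 u, u \in leaves T & tmap T u = v) &
      (forall f, simple_path ends (tmap T (tends T f).1) (tmap T (tends T f).2)
                             (tpath T f) (tpverts T f))].

(* max A-B flow in T under y >= max A-B flow in G under xt *)
Definition flow_dominates (xt : E -> R) (T : temb) : Prop :=
  forall A B : {set V}, [disjoint A & B] ->
  forall g : E -> R, is_flow ends xt A B g ->
  exists2 h : tedge T -> R,
    is_flow (tends T) (ty xt (T:=T)) (leaves_in T A) (leaves_in T B) h &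
    flow_value ends g A <= flow_value (tends T) h (leaves_in T A).

(* a finitely supported probability distribution over tree embeddings of
   (G, xt) with the congestion and flow properties *)
Definition good_distribution (xt : E -> R) (beta : R) (D : seq (R * temb)) : Prop :=
  [/\ (forall pT, List.In pT D -> 0 < pT.1),
      \sum_(pT <- D) pT.1 = 1,
      (forall pT, List.In pT D -> is_tree_embedding pT.2 /\ flow_dominates xt pT.2) &
      (forall e, \sum_(pT <- D) pT.1 * (\sum_(f in Minv pT.2 [set e]) ty xt f)
                  <= beta * xt e)].

Definition in_support (D : seq (R * temb)) (T : temb) : Prop :=
  exists2 p, 0 < p & List.In (p, T) D.

Definition good_for (xt : E -> R) (T : temb) (F : {set E}) : Prop :=
  \sum_(f in Minv T F) ty xt f <= 2^-1.

Definition QF (L F : {set E}) : {set {set V}} :=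
  [set [set w | gconn ends (L :\: F) v w] | v in setT].

Definition shattered (T : temb) (F : {set E}) (Q : {set V}) : bool :=
  [exists u1, exists u2,
     [&& u1 \in leaves T, u2 \in leaves T, tmap T u1 \in Q, tmap T u2 \in Q &
         ~~ gconn (tends T) (~: Minv T F) u1 u2]].

End Setup.

(* Main.v *)
Require Import Defs.
From Stdlib Require List.
From HB Require Import structures.
From mathcomp Require Import all_boot all_order all_algebra.
Set Implicit Arguments. Unset Strict Implicit. Unset Printing Implicit Defensive.
Import Order.TTheory GRing.Theory Num.Theory.

Section G.
Variables (W K : finType) (ends : K -> W * W).

Lemma gadj_sym (F : {set K}) : symmetric (gadj ends F).
Proof.
move=> u v; apply/existsP/existsP => -[k /andP[kF h]]; exists k;
  by rewrite kF orbC.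
Qed.

Lemma gconn_sym (F : {set K}) : connect_sym (gadj ends F).
Proof. exact: sym_connect_sym (gadj_sym F). Qed.

Lemma gconn_trans (F : {set K}) u v w : gconn ends F u v -> gconn ends F v w -> gconn ends F u w.
Proof. exact: connect_trans. Qed.

Lemma gadj_mono (F G : {set K}) u v : F \subset G -> gadj ends F u v -> gadj ends G u v.
Proof.
move=> sFG /existsP[k /andP[kF h]]; apply/existsP; exists k.
by rewrite (subsetP sFG _ kF).
Qed.

Lemma gconn_mono (F G : {set K}) u v : F \subset G -> gconn ends F u v -> gconn ends G u v.
Proof.
move=> sFG; apply: connect_sub => a b h; apply: connect1; exact: gadj_mono h.
Qed.

Lemma gconn_edge (F : {set K}) k : k \in F -> gconn ends F (ends k).1 (ends k).2.
Proof.
move=> kF; apply: connect1; apply/existsP; exists k.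
by rewrite kF; case: (ends k) => a b /=; rewrite eqxx.
Qed.

Lemma avoid_path k x y p :
  path (gadj ends setT) y p -> x \notin y :: p ->
  ((ends k).1 == x) || ((ends k).2 == x) ->
  gconn ends (setT :\ k) y (last y p).
Proof.
elim: p y => [|z p IH] y /=; first by move=> _ _ _; exact: connect0.
case/andP=> /existsP[k' /andP[_ hk']] hp.
rewrite !inE negb_or => /andP[xy xzp] hk.
apply: (@gconn_trans _ _ z); last first.
  by apply: IH => //.
apply: connect1; apply/existsP; exists k'; rewrite hk' andbT !inE andbT.
apply/eqP => kk; subst k'.
move/norP: xzp => [xz _].
case/orP: hk' => /eqP e; rewrite e /= in hk;
  by case/orP: hk => /eqP ex; subst; rewrite eqxx in xy xz.
Qed.

Definition side f w := gconn ends (setT :\ f) (ends f).1 w.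

Lemma side_conn f u w : gconn ends (setT :\ f) u w -> side f u = side f w.
Proof. by move=> h; rewrite /side /gconn (same_connect_r (gconn_sym _) h). Qed.

Lemma sep_path (Fs : {set K}) :
  (forall k, ~~ gconn ends (setT :\ k) (ends k).1 (ends k).2) ->
  forall x p, path (gadj ends setT) x p -> uniq (x :: p) ->
  ~~ gconn ends (~: Fs) x (last x p) ->
  exists2 f, f \in Fs & side f x != side f (last x p).
Proof.
move=> br x p; elim: p x => [|y p IH] x /=; first by move=> _ _; rewrite /gconn connect0.
case/andP=> /existsP[k /andP[_ hk]] hp /andP[xnin up] nc.
case: (boolP (k \in Fs)) => kFs; last first.
  have cxy : gconn ends (~: Fs) x y.
    apply: connect1; apply/existsP; exists k; by rewrite inE kFs.
  have nc' : ~~ gconn ends (~: Fs) y (last y p).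
    by apply: contra nc; apply: gconn_trans.
  case: (IH y hp up nc') => f fF hf; exists f => //.
  rewrite (side_conn (u:=x) (w:=y)) //.
  apply: gconn_mono cxy; apply/subsetP => z; rewrite !inE andbT.
  by apply: contra => /eqP ->.
exists k => //.
have hyl : side k y = side k (last y p).
  apply: side_conn; apply: (avoid_path (x:=x)) => //.
  by case/orP: hk => /eqP ->; rewrite eqxx ?orbT.
rewrite -hyl /side.
have := br k; rewrite /gconn.
case/orP: hk => /eqP -> /=.
  by rewrite connect0 => h; apply/negP => /eqP h2; rewrite -h2 in h.
rewrite connect0 (gconn_sym _ y x) => h.
by apply/negP => /eqP h2; rewrite h2 in h.
Qed.

Lemma cross_cut (F : {set K}) (X : {set W}) a p :
  path (gadj ends F) a p -> (a \in X) != (last a p \in X) ->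
  exists2 k, k \in F :&: gcut ends X & gconn ends F a (ends k).1.
Proof.
elim: p a => [|b p IH] a /=; first by rewrite eqxx.
case/andP=> hab hp hX.
case: (boolP ((a \in X) == (b \in X))) => e.
  have hX' : (b \in X) != (last b p \in X) by rewrite -(eqP e).
  have [k kF hk] := IH b hp hX'.
  exists k => //; exact: gconn_trans (connect1 hab) hk.
move: (hab) => /existsP[k /andP[kF hk]]; exists k.
  rewrite !inE kF /=.
  by case/orP: hk => /eqP -> /=; rewrite // eq_sym.
case/orP: hk => /eqP -> /=; first exact: connect0.
exact: connect1.
Qed.

End G.

From mathcomp Require Import ring lra.
Local Open Scope ring_scope.

Theorem lemma5p9 (R : realFieldType) (V E : finType) (ends : E -> V * V)
  (q : nat) (Sd Td : 'I_q -> {set V}) (l : nat) (El : {set E})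
  (x : E -> R) (beta : R) (D : seq (R * temb V E)) :
  (1 <= l)%N ->
  (forall i, ledge_connected ends l El (Sd i) (Td i)) ->
  (forall e, 0 <= x e <= 1) ->
  (forall e, e \in El -> x e = 1) ->
  (forall i (X : {set V}), Td i \subset X -> X \subset ~: Sd i ->
     l%:R + 1 <= \sum_(e in gcut ends X) x e) ->
  1 <= beta ->
  good_distribution ends (xtilde #|V| l beta x) beta D ->
  forall (F : {set E}) (T : temb V E),
    F \subset LARGE l beta x -> #|F| = l ->
    in_support D T -> good_for ends (xtilde #|V| l beta x) T F ->
    (#|[set Q in QF ends (LARGE l beta x) F | shattered T F Q]|%:R
       <= 2 * l%:R * beta).
Proof.
move=> l1 _ x01 _ _ beta1 [_ _ hD _] F T sFL cardF [p p0 inD] good.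
have [/andP[conT brT] injT _ _] := (hD _ inD).1.
rewrite /= in conT brT injT.
set L := LARGE l beta x. set xt := xtilde #|V| l beta x.
set c := (4 * l%:R * beta)^-1.
have lpos : 0 < l%:R :> R by rewrite ltr0n.
have bpos : 0 < beta by apply: lt_le_trans beta1.
have Hm : 0 < 4 * l%:R * beta by rewrite !mulr_gt0.
have cpos : 0 < c by rewrite invr_gt0.
have xt0 : forall e, 0 <= xt e.
  move=> e; rewrite /xt /xtilde; case: ifP => _; first exact: ltW.
  by case: ifP => _ //; case/andP: (x01 e).
have xtL : forall e, e \in L -> xt e = c.
  by move=> e; rewrite /L /LARGE inE /xt /xtilde => ->.
set L' := L :\: F.
pose P := [set pe : tedge T * E | (pe.1 \in Minv T F) && (pe.2 \in L' :&: gcut ends (tside pe.1))].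
pose g (pe : tedge T * E) := [set w | gconn ends L' (ends pe.2).1 w].
have ts : forall f u, u \in leaves T -> (tmap (t:=T) u \in tside f) = side (tends (t:=T)) f u.
  move=> f u lu; rewrite /tside inE; apply/existsP/idP.
    case=> u' /and3P[lu' /eqP mu hc].
    by rewrite (injT _ _ lu' lu mu) in hc.
  by move=> h; exists u; rewrite lu eqxx.
have sub : [set Q in QF ends L F | shattered T F Q] \subset g @: P.
  apply/subsetP => Q; rewrite inE => /andP[/imsetP[v _ ->] sh].
  case/existsP: sh => u1 /existsP[u2 /and5P[lu1 lu2 q1 q2 nc]].
  rewrite inE in q1; rewrite inE in q2.
  have := forallP (forallP conT u1) u2.
  case/connectP => pth pth_p pth_e.
  move: pth_e; case/shortenP: pth_p => p' pp' up' _ pth_e.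
  have br : forall k, ~~ gconn (tends (t:=T)) (setT :\ k) (tends (t:=T) k).1 (tends (t:=T) k).2.
    by move=> k; exact: (forallP brT k).
  have nc' : ~~ gconn (tends (t:=T)) (~: Minv T F) u1 (last u1 p') by rewrite -pth_e.
  have [f fM hs] := sep_path br pp' up' nc'.
  rewrite -pth_e in hs.
  have cu : gconn ends L' (tmap (t:=T) u1) (tmap (t:=T) u2).
    apply: (gconn_trans (v:=v)) => //; rewrite /gconn gconn_sym; exact: q1.
  case/connectP: cu => pp pp_p pp_e.
  have hX : (tmap (t:=T) u1 \in tside f) != (last (tmap (t:=T) u1) pp \in tside f).
    by rewrite -pp_e !ts.
  have [k kin hk] := cross_cut pp_p hX.
  apply/imsetP; exists (f, k); first by rewrite inE /= fM kin.
  have hvk : gconn ends L' v (ends k).1 := gconn_trans q1 hk.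
  by apply/setP => w; rewrite !inE /= /gconn (same_connect (gconn_sym ends _) hvk).
have cardP : #|P|%:R * c <= 2^-1.
  apply: le_trans good; rewrite /good_for /ty.
  apply: le_trans (_ : \sum_(f in Minv T F) \sum_(e in gcut ends (tside f) | e \in L') xt e <= _); last first.
    apply: ler_sum => f _.
    rewrite [X in _ <= X](bigID (fun e => e \in L')) /= lerDl.
    by apply: sumr_ge0 => e _; exact: xt0.
  rewrite pair_big_dep /= (eq_bigr (fun _ => c)); last first.
    by move=> pe /andP[_ /andP[_ /setDP[/xtL ->]]].
  rewrite (eq_bigl (mem P)); last first.
    by move=> pe; rewrite /= [pe \in P]inE /= [_ \in L' :&: _]inE [(pe.2 \in L') && _]andbC.
  by rewrite sumr_const mulr_natl.
have h : #|[set Q in QF ends L F | shattered T F Q]|%:R * c <= 2^-1.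
  apply: le_trans cardP; apply: ler_wpM2r; first exact: ltW.
  rewrite ler_nat; apply: leq_trans (subset_leq_card sub) _.
  exact: leq_imset_card.
set k := (#|_|)%:R in h *.
have -> : k = k * c * (4 * l%:R * beta) by rewrite -mulrA mulVf ?mulr1 // gt_eqF.
apply: le_trans (ler_wpM2r (ltW Hm) h) _.
rewrite le_eqVlt; apply/orP; left; apply/eqP; field; by rewrite ?pnatr_eq0 ?oner_eq0.
Qed.
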